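(* We have $\Theta\pi(U)\Theta=\pi'(U)$ and $\Theta\pi(a(\mathbb{K}))\Theta=\pi'(a(-\mathbb{K}))$ for every $a\in c(\mathbb{Z})$. Consequently there is an anti-homomorphism $\theta:A\to A$ (with $\theta(U)=U$ and $\theta(a(\mathbb{K}))=a(-\mathbb{K})$) such that $\Theta\pi(a)\Theta=\pi'(\theta(a))$ for all $a\in A$.
   Context: Let $\{E_k\}$ be the canonical basis of $\ell^2(\mathbb{Z})$, $UE_k=E_{k+1}$, $\mathbb{K}E_k=kE_k$, $a(\mathbb{K})E_k=a(k)E_k$. $c(\mathbb{Z})$ is the set of $a:\mathbb{Z}\to\mathbb{C}$ with finite limits at $+\infty$ and at $-\infty$. $A$ is the C$^*$-algebra generated by $U$ and all $a(\mathbb{K})$, $a\in c(\mathbb{Z})$. $\mathcal{H}$ is the Hilbert space of Hilbert–Schmidt operators on $\ell^2(\mathbb{Z})$ with $\langle f,g\rangle=\mathrm{tr}(f^*g)$, each $f$ written uniquely $f=\sum_nU^nf_n(\mathbb{K})$. For $a\in A$, $\pi(a)f=af$ and $\pi'(a)f=fa$ (operator products). $\Theta f=\sum_nU^nf_n(-\mathbb{K}-n)$. *)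

(* Defs.v *)
From HB Require Import structures.
From mathcomp Require Import all_boot all_order all_algebra.
From mathcomp Require Import complex.
From mathcomp Require Import boolp classical_sets reals.
Set Implicit Arguments. Unset Strict Implicit. Unset Printing Implicit Defensive.
Import Order.TTheory GRing.Theory Num.Theory.
Local Open Scope ring_scope.
Local Open Scope complex_scope.

Section Defs.
Variable R : realType.
Local Notation C := R[i].

(* A (possibly unbounded) operator on l^2(Z) is given by its matrix in the
   canonical basis {E_k}: T i j = <E_i, T E_j>. *)
Definition mat := int -> int -> C.

Definition wsum (N : nat) (u : int -> C) : C :=
  \sum_(0 <= m < (N.*2).+1) u (m%:Z - N%:Z).

Definition cvg_zsum (u : int -> C) (z : C) : Prop :=
  forall e : R, 0 < e -> exists N0 : nat, forall N : nat, (N0 <= N)%N ->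
    `|wsum N u - z| < e%:C.

(* the sum of a series over Z (0 if it does not converge) *)
Definition zsum (u : int -> C) : C := xget 0 [set z | cvg_zsum u z].

Definition mmul (S T : mat) : mat := fun i j => zsum (fun k => S i k * T k j).

Definition madd (S T : mat) : mat := fun i j => S i j + T i j.
Definition mscale (c : C) (S : mat) : mat := fun i j => c * S i j.
Definition madj (S : mat) : mat := fun i j => (S j i)^*.

(* operator norm bound: ||T x|| <= e ||x|| for all finitely supported x *)
Definition normle (T : mat) (e : R) : Prop :=
  forall (N K : nat) (x : int -> C),
    wsum K (fun i => `|wsum N (fun j => T i j * x j)| ^+ 2)
      <= (e ^+ 2)%:C * wsum N (fun j => `|x j| ^+ 2).

Definition bounded (T : mat) : Prop := exists M : R, normle T M.

Definition Ushift : mat := fun i j => if i == j + 1 then 1 else 0.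
Definition mulop (a : int -> C) : mat := fun i j => if i == j then a i else 0.

Definition cZ (a : int -> C) : Prop :=
  exists lp lm : C, forall e : R, 0 < e -> exists N : nat, forall k : int,
    (N%:Z <= k -> `|a k - lp| < e%:C) /\ (k <= - N%:Z -> `|a k - lm| < e%:C).

Definition cstar_closed (P : set mat) : Prop :=
  [/\ forall S T, P S -> P T -> P (madd S T),
      forall c S, P S -> P (mscale c S),
      forall S T, P S -> P T -> P (mmul S T),
      forall S, P S -> P (madj S) &
      forall T, bounded T ->
        (forall e : R, 0 < e -> exists S, P S /\ normle (madd T (mscale (-1) S)) e) ->
        P T].

Definition algA : set mat := fun T =>
  forall P : set mat, cstar_closed P -> P Ushift ->
    (forall a, cZ a -> P (mulop a)) -> P T.

Definition HS (f : mat) : Prop :=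
  exists M : R, forall N : nat,
    wsum N (fun i => wsum N (fun j => `|f i j| ^+ 2)) <= M%:C.

Definition piL (a : mat) (f : mat) : mat := mmul a f.
Definition piR (a : mat) (f : mat) : mat := mmul f a.

(* f = sum_n U^n f_n(K): U^n f_n(K) E_k = f_n(k) E_{k+n}, so f_n(k) = f (k+n) k *)
Definition fcoef (f : mat) (n k : int) : C := f (k + n) k.
(* the operator sum_n U^n g_n(K) *)
Definition ofcoef (g : int -> int -> C) : mat := fun i j => g (i - j) j.
(* Theta f = sum_n U^n f_n(-K-n) *)
Definition Theta (f : mat) : mat := ofcoef (fun n k => fcoef f n (- k - n)).

End Defs.

(* Main.v *)
Require Import Defs.
From HB Require Import structures.
From mathcomp Require Import all_boot all_order all_algebra.
From mathcomp Require Import complex.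
From mathcomp Require Import boolp classical_sets reals.
From mathcomp Require Import zify lra.
Import Order.TTheory GRing.Theory Num.Theory.
Local Open Scope ring_scope.
Local Open Scope complex_scope.

Section Aux.
Variable R : realType.
Local Notation C := R[i].

Lemma ThetaE (f : mat R) i j : Theta f i j = f (-j) (-i).
Proof. rewrite /Theta /ofcoef /fcoef; congr f; lia. Qed.

Lemma wsum_neg N (u : int -> C) : wsum N (fun k => u (-k)) = wsum N u.
Proof.
rewrite /wsum big_nat_rev /=; apply: eq_big_nat => m /andP[_ hm].
congr u; lia.
Qed.

Lemma wsum_negE N (u v : int -> C) : (forall k, u k = v (-k)) -> wsum N u = wsum N v.
Proof.
move=> h; rewrite -(wsum_neg N v); apply: eq_bigr => m _; exact: h.
Qed.

Lemma zsum_neg (u : int -> C) : zsum (fun k => u (-k)) = zsum u.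
Proof.
rewrite /zsum; congr xget; apply/seteqP; split => z H e he;
  have [N0 HN] := H e he; exists N0 => N hN; have := HN N hN;
  by rewrite wsum_neg.
Qed.

Lemma Theta_invol (f : mat R) : Theta (Theta f) = f.
Proof. by apply/funext => i; apply/funext => j; rewrite !ThetaE !opprK. Qed.

Lemma Theta_mmul (S T : mat R) : Theta (mmul S T) = mmul (Theta T) (Theta S).
Proof.
apply/funext => i; apply/funext => j; rewrite ThetaE /mmul.
transitivity (zsum (fun k => Theta T i (-k) * Theta S (-k) j)); last first.
  exact: (zsum_neg (fun k => Theta T i k * Theta S k j)).
congr zsum; apply/funext => k; by rewrite !ThetaE !opprK mulrC.
Qed.

Lemma Theta_piL (A f : mat R) : Theta (piL A (Theta f)) = piR (Theta A) f.
Proof. by rewrite /piL /piR Theta_mmul Theta_invol. Qed.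

Lemma Theta_U : Theta (Ushift R) = Ushift R.
Proof.
apply/funext => i; apply/funext => j; rewrite ThetaE /Ushift.
have -> : (- j == - i + 1) = (i == j + 1) by apply/eqP/eqP; lia.
done.
Qed.

Lemma Theta_mulop (a : int -> C) : Theta (mulop a) = mulop (fun k => a (-k)).
Proof.
apply/funext => i; apply/funext => j; rewrite ThetaE /mulop.
have [->|h] := eqVneq i j; first by rewrite eqxx.
have -> : (- j == - i) = false by apply/eqP; lia.
done.
Qed.

Lemma Theta_madd (S T : mat R) : Theta (madd S T) = madd (Theta S) (Theta T).
Proof. by apply/funext => i; apply/funext => j; rewrite /madd !ThetaE. Qed.

Lemma Theta_mscale c (S : mat R) : Theta (mscale c S) = mscale c (Theta S).
Proof. by apply/funext => i; apply/funext => j; rewrite /mscale !ThetaE. Qed.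

Lemma Theta_madj (S : mat R) : Theta (madj S) = madj (Theta S).
Proof. by apply/funext => i; apply/funext => j; rewrite /madj !ThetaE. Qed.


Lemma ge0_realC (c : C) : 0 <= c -> exists r : R, c = r%:C /\ 0 <= r.
Proof.
case: c => a b; rewrite lecE /= => /andP[/eqP hb ha]; exists a; split; last by [].
by rewrite hb.
Qed.

Lemma normle_refl {X : mat R} {e} : normle X e -> normle (fun i j => X (-i) (-j)) e.
Proof.
move=> H N K x; have := H N K (fun j => x (-j)).
rewrite (wsum_neg N (fun j => `|x j| ^+ 2)).
suff -> : wsum K (fun i => `|wsum N (fun j => X (-i) (-j) * x j)| ^+ 2) =
          wsum K (fun i => `|wsum N (fun j => X i j * x (-j))| ^+ 2) by [].
apply: wsum_negE => k /=; congr (`|_| ^+ 2); apply: wsum_negE => j.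
by rewrite !opprK.
Qed.

Lemma amgm (t : R) (a b : C) : 0 < t ->
  (2 * t)%:C * (`|a| * `|b|) <= (t ^+ 2)%:C * `|a| ^+ 2 + `|b| ^+ 2.
Proof.
move=> ht; rewrite !normc_def.
set ra := Num.sqrt _; set rb := Num.sqrt _.
rewrite -!rmorphXn -!rmorphM -rmorphD lecR.
have := sqr_ge0 (t * ra - rb); nra.
Qed.

Lemma normle_tr {X : mat R} {e} : normle X e -> normle (fun i j => X j i) e.
Proof.
move=> H N K x.
pose y i := wsum N (fun j => X j i * x j).
pose w i := (y i)^*.
pose z j := wsum K (fun i => X j i * w i).
pose S := wsum K (fun i => `|y i| ^+ 2).
pose Xs := wsum N (fun j => `|x j| ^+ 2).
pose Z := wsum N (fun j => `|z j| ^+ 2).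
pose P := wsum N (fun j => `|x j| * `|z j|).
change (S <= (e ^+ 2)%:C * Xs).
have S0 : 0 <= S by apply: sumr_ge0 => m _; rewrite exprn_ge0.
have X0 : 0 <= Xs by apply: sumr_ge0 => m _; rewrite exprn_ge0.
have Z0 : 0 <= Z by apply: sumr_ge0 => m _; rewrite exprn_ge0.
have P0 : 0 <= P by apply: sumr_ge0 => m _; rewrite mulr_ge0.
have HS : S = wsum N (fun j => x j * z j).
  rewrite /S /wsum.
  transitivity (\sum_(0 <= m < K.*2.+1) \sum_(0 <= n < N.*2.+1)
     x (n%:Z - N%:Z) * (X (n%:Z - N%:Z) (m%:Z - K%:Z) * w (m%:Z - K%:Z))).
    apply: eq_bigr => m _; rewrite sqr_normc /y /wsum mulr_suml.
    by apply: eq_bigr => n _; rewrite /w mulrCA mulrA.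
  rewrite exchange_big; apply: eq_bigr => n _; rewrite /z /wsum mulr_sumr.
  done.
have HZ : Z <= (e ^+ 2)%:C * S.
  have := H K N w; rewrite /Z /S /z.
  suff -> : wsum K (fun j => `|w j| ^+ 2) = wsum K (fun i => `|y i| ^+ 2) by [].
  by apply: eq_bigr => m _; rewrite /w normcJ.
have HP : S <= P.
  rewrite -(ger0_norm S0) HS /P; apply: le_trans (ler_norm_sum _ _ _) _.
  by apply: ler_sum => m _; rewrite normrM.
have HA : forall t : R, 0 < t -> (2 * t)%:C * P <= (t ^+ 2)%:C * Xs + Z.
  move=> t ht; rewrite /P /Xs /Z /wsum !mulr_sumr -big_split /=.
  by apply: ler_sum => m _; apply: amgm.
have [s [Es s0]] := ge0_realC _ S0.
have [xs [Exs xs0]] := ge0_realC _ X0.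
have [zz [Ezz zz0]] := ge0_realC _ Z0.
have [p [Ep p0]] := ge0_realC _ P0.
rewrite Es Exs -rmorphM lecR.
move: HZ HP HA; rewrite Es Exs Ezz Ep -rmorphM !lecR => HZ HP HA.
have {}HA : forall t : R, 0 < t -> 2 * t * p <= t ^+ 2 * xs + zz.
  by move=> t ht; have := HA t ht; rewrite -!rmorphM -rmorphD lecR.
have [e0|] := eqVneq (e ^+ 2) 0.
  rewrite e0 mul0r in HZ *.
  have [pl|pg] := lerP p 0; first by lra.
  pose t := p / (xs + 1).
  have ht : 0 < t by rewrite divr_gt0 // ltr_pwDr.
  have htd : t * (xs + 1) = p by rewrite /t mulfVK // gt_eqF // ltr_pwDr.
  have := HA t ht; nra.
move=> en0; have ep : 0 < e ^+ 2 by rewrite lt_def en0 sqr_ge0.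
have := HA _ ep; nra.
Qed.


Lemma normle_Theta (X : mat R) e : normle X e -> normle (Theta X) e.
Proof.
move=> H; have := normle_refl (normle_tr H).
suff -> : Theta X = (fun i j => (fun i j => X j i) (-i) (-j)) by [].
by apply/funext => i; apply/funext => j; rewrite ThetaE.
Qed.

Lemma algA_Theta (T : mat R) : algA T -> algA (Theta T).
Proof.
move=> hT P hP hU hM; apply: (hT (fun X => P (Theta X))).
- case: hP => hadd hsc hmul hadj hcl; split.
  + by move=> S T' hS hT'; rewrite Theta_madd; apply: hadd.
  + by move=> c S hS; rewrite Theta_mscale; apply: hsc.
  + by move=> S T' hS hT'; rewrite Theta_mmul; apply: hmul.
  + by move=> S hS; rewrite Theta_madj; apply: hadj.
  + move=> T' [M hM'] happ; apply: hcl.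
      by exists M; apply: normle_Theta.
    move=> e he; have [S [hS hn]] := happ e he; exists (Theta S); split => //.
    by rewrite -Theta_mscale -Theta_madd; apply: normle_Theta.
- by rewrite /= Theta_U.
- move=> a [lp [lm ha]] /=; rewrite Theta_mulop; apply: hM.
  exists lm, lp => e he; have [N HN] := ha e he; exists N => k.
  have [h1 h2] := HN (- k); split => hk.
    by apply: h2; lia.
  by apply: h1; lia.
Qed.

End Aux.

Theorem mainTheorem6 (R : realType) :
  (forall f : mat R, HS f -> Theta (piL (Ushift R) (Theta f)) = piR (Ushift R) f) /\
  (forall a : int -> R[i], cZ a -> forall f : mat R, HS f ->
     Theta (piL (mulop a) (Theta f)) = piR (mulop (fun k => a (- k))) f) /\
  (exists theta : mat R -> mat R,
     [/\ forall T, algA T -> algA (theta T),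
         theta (Ushift R) = Ushift R &
         forall a : int -> R[i], cZ a -> theta (mulop a) = mulop (fun k => a (- k))] /\
     [/\ forall S T, algA S -> algA T -> theta (madd S T) = madd (theta S) (theta T),
         forall (c : R[i]) S, algA S -> theta (mscale c S) = mscale c (theta S) &
         forall S T, algA S -> algA T -> theta (mmul S T) = mmul (theta T) (theta S)] /\
     (forall T, algA T -> forall f : mat R, HS f ->
           Theta (piL T (Theta f)) = piR (theta T) f)).
Proof.
split; first by move=> f _; rewrite Theta_piL Theta_U.
split; first by move=> a _ f _; rewrite Theta_piL Theta_mulop.
exists (@Theta R); split; first split.
- exact: algA_Theta.
- exact: Theta_U.
- by move=> a _; exact: Theta_mulop.
split; first split.
- by move=> S T _ _; exact: Theta_madd.
- by move=> c S _; exact: Theta_mscale.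
- by move=> S T _ _; exact: Theta_mmul.
by move=> T _ f _; exact: Theta_piL.
Qed.
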